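(* Let $(a,b)\in\mathbb{N}^2$ with $a\ge 2$, and let $\ell$ be a prime with $\ell>\max(a,b)$. Write the base-$a$ expansion of $\ell$ as \[ \ell = a_d a^{d-1}+a_{d-1}a^{d-2}+\cdots+a_2 a+a_1,\qquad 0\le a_i\le a-1 \text{ for all } i, \] and define \[ \mathcal{P}(x):=\frac{x\,b}{\ell\,a}\left(a_d x^{d-1}+a_{d-1}x^{d-2}+\cdots+a_1\right). \] Then $\mathcal{P}(a)=b$, i.e. $(a,b)$ lies on the curve $y=\mathcal{P}(x)$, and there is no lattice point on the portion of this curve joining $(0,0)$ to $(a,b)$; that is, for every integer $t$ with $0<t<a$, $\mathcal{P}(t)\notin\mathbb{Z}$.
   Context: $\mathbb{N}$ denotes the positive integers. The $a_i$ are the base-$a$ digits of $\ell$ (with $a_1$ the units digit). *)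

(* Defs.v *)
From mathcomp Require Import all_boot all_order all_algebra.
Set Implicit Arguments. Unset Strict Implicit. Unset Printing Implicit Defensive.
Import Order.TTheory GRing.Theory Num.Theory.
Local Open Scope ring_scope.

Definition ndigits (a n : nat) : nat := (trunc_log a n).+1.

(* The i-th base-a digit of n, 0-indexed from the units digit:
   digit a n i = a_{i+1} in the paper's notation. *)
Definition digit (a n i : nat) : nat := (n %/ a ^ i) %% a.

Definition Pcurve (a b l : nat) (x : rat) : rat :=
  (x * b%:R) / (l%:R * a%:R) *
  \sum_(i < ndigits a l) (digit a l i)%:R * x ^+ i.

(* Main.v *)
Require Import Defs.
From mathcomp Require Import all_boot all_order all_algebra zify ring.
Import Order.TTheory GRing.Theory Num.Theory.

Lemma digits_mod a n k : (0 < a)%N ->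
  (\sum_(i < k) digit a n i * a ^ i)%N = n %% a ^ k.
Proof.
move=> a0; elim: k => [|k IH]; first by rewrite big_ord0 expn0 modn1.
rewrite big_ord_recr /= IH /digit.
have pk : (0 < a ^ k)%N by rewrite expn_gt0 a0.
have hr : (n %% a ^ k < a ^ k)%N by rewrite ltn_mod.
have h2 := divn_eq n (a ^ k).
move: hr h2; set q := n %/ a ^ k; set r := n %% a ^ k; clearbody q r => hr h2.
have hn : n = q %/ a * (a ^ k.+1) + ((q %% a) * a ^ k + r).
  have h1 := divn_eq q a.
  rewrite expnS {1}h2 {1}h1; ring.
rewrite {1}hn modnMDl addnC; apply/esym/modn_small.
have hq : (q %% a < a)%N by rewrite ltn_mod.
rewrite expnS.
have : (q %% a * a ^ k + r < (q %% a).+1 * a ^ k)%N by rewrite mulSn; lia.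
move=> h; apply: (leq_trans h); by rewrite leq_mul2r hq orbT.
Qed.

Local Open Scope ring_scope.

Theorem theorem2p1 (a b l : nat) :
  (2 <= a)%N -> (0 < b)%N -> prime l -> (maxn a b < l)%N ->
  Pcurve a b l a%:R = b%:R /\
  (forall t : nat, (0 < t < a)%N ->
     ~ exists z : int, Pcurve a b l t%:R = z%:~R).
Proof.
move=> a2 b0 pl; rewrite gtn_max => /andP[al bl].
have a0 : (0 < a)%N by apply: leq_trans a2.
have l0 : (0 < l)%N by apply: leq_trans al.
pose j := trunc_log a l.
pose S t := (\sum_(i < j.+1) digit a l i * t ^ i)%N.
have hsum t : Pcurve a b l t%:R = t%:R * b%:R / (l%:R * a%:R) * (S t)%:R.
  rewrite /Pcurve /S natr_sum; congr (_ * _); apply: eq_bigr => i _.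
  by rewrite natrM natrX.
have Sa : S a = l.
  rewrite /S digits_mod // modn_small //; exact: trunc_log_ltn.
have j0 : (0 < j)%N by rewrite /j trunc_log_gt0 a2 /=; lia.
pose D := digit a l j.
have aj0 : (0 < a ^ j)%N by rewrite expn_gt0 a0.
have D0 : (0 < D)%N.
  rewrite /D /digit modn_small; last by rewrite ltn_divLR // -expnS trunc_log_ltn.
  by rewrite divn_gt0 // trunc_logP.
have hl : l%:R * a%:R != 0 :> rat by rewrite mulf_neq0 // pnatr_eq0 -lt0n.
split.
  rewrite hsum Sa; by field; rewrite !pnatr_eq0 -!lt0n a0 l0.
move=> t /andP[t0 ta] [z hz].
have St0 : (0 < S t)%N.
  rewrite /S big_ord_recr /=; apply: leq_trans (leq_addl _ _).
  by rewrite muln_gt0 D0 expn_gt0 t0.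
have Stl : (S t < l)%N.
  rewrite -Sa /S big_ord_recr [X in (_ < X)%N]big_ord_recr /=.
  have h1 : (\sum_(i < j) digit a l i * t ^ i <= \sum_(i < j) digit a l i * a ^ i)%N.
    apply: leq_sum => i _; rewrite leq_mul2l; apply/orP; right.
    elim: (nat_of_ord i) => // n IH; by rewrite !expnS leq_mul // ltnW.
  have h2 : (D * t ^ j < D * a ^ j)%N by rewrite ltn_mul2l D0 ltn_exp2r.
  rewrite -/D -addnS; exact: leq_add h1 h2.
have E : ((t * b * S t)%N%:R : rat) = z%:~R * ((l * a)%N%:R).
  rewrite !natrM -hz hsum; by field; rewrite !pnatr_eq0 -!lt0n a0 l0.
have H : ((t * b * S t)%N%:Z) = (z * (l * a)%N%:Z).
  apply: (@intr_inj rat); rewrite intrM -!pmulrn; exact: E.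
clear hz E; case: z H => [n|n] H; last by move: H; rewrite NegzE; lia.
have {}H : (t * b * S t = n * (l * a))%N by move: H; rewrite -PoszM => -[].
have : (l %| t * b * S t)%N by rewrite H dvdn_mull // dvdn_mulr.
rewrite !Euclid_dvdM // => /orP[/orP[]|] /dvdn_leq; lia.
Qed.
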